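(* For any fixed $m$, any fixed $k<m$ and any fixed $\vec p\in(0,1)^m$, $$\Pr_{P\sim(\pi_{\vec p})^n}\big(\mathrm{top}_k(\vec p)\subseteq\mathrm{CORE}(P)\big)=1-\exp(-\Omega(n)).$$
   Context: $\mathcal A=[m]$, $\mathcal A_k$ the $k$-subsets. Approval profile $P=(A_1,\dots,A_n)$, $A_j\subseteq\mathcal A$, drawn i.i.d. from $\pi_{\vec p}$, where $\Pr_{\pi_{\vec p}}(A)=\prod_{i\in A}p_i\prod_{i\notin A}(1-p_i)$. $\mathrm{top}_k(\vec p)$ is the set of $W\in\mathcal A_k$ with $p_i\ge p_j$ for all $i\in W$, $j\notin W$. $W\in\mathcal A_k$ is in $\mathrm{CORE}(P)$ iff for every nonempty set of voters $N'\subseteq[n]$ and every $W'\subseteq\mathcal A$ with $|W'|/k\le|N'|/n$ there is $j\in N'$ with $|A_j\cap W'|\le|A_j\cap W|$. Asymptotics as $n\to\infty$. *)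

(* Defs.v *)
From HB Require Import structures.
From mathcomp Require Import all_boot all_order all_algebra.
From mathcomp Require Import reals.
From mathcomp Require Import sequences exp.
Set Implicit Arguments. Unset Strict Implicit. Unset Printing Implicit Defensive.
Import Order.TTheory GRing.Theory Num.Theory.
Local Open Scope ring_scope.

(* Alternatives are 'I_m; a ballot (approval set) is a {set 'I_m};
   an approval profile of n voters is a {ffun 'I_n -> {set 'I_m}}. *)
Definition profile (n m : nat) := {ffun 'I_n -> {set 'I_m}}.

Definition ballot_prob {R : realType} {m : nat} (p : 'I_m -> R) (A : {set 'I_m}) : R :=
  (\prod_(i in A) p i) * (\prod_(i in ~: A) (1 - p i)).

Definition profile_prob {R : realType} {n m : nat} (p : 'I_m -> R)
  (E : pred (profile n m)) : R :=
  \sum_(P : profile n m | E P) \prod_(j < n) ballot_prob p (P j).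

Definition in_topk {R : realType} {m : nat} (p : 'I_m -> R) (k : nat) (W : {set 'I_m}) : bool :=
  (#|W| == k) && [forall i in W, [forall j in ~: W, p j <= p i]].

(* W in CORE(P): |W| = k and for all nonempty N' and all W' with
   |W'|/k <= |N'|/n (written cross-multiplied as |W'| * n <= |N'| * k),
   some j in N' has |A_j :&: W'| <= |A_j :&: W|. *)
Definition in_core {n m : nat} (k : nat) (P : profile n m) (W : {set 'I_m}) : bool :=
  (#|W| == k) &&
  [forall N' : {set 'I_n}, forall W' : {set 'I_m},
     ((N' != set0) && (#|W'| * n <= #|N'| * k)%N) ==>
     [exists j in N', (#|P j :&: W'| <= #|P j :&: W|)%N]].

Definition topk_in_core {R : realType} {n m : nat} (p : 'I_m -> R) (k : nat)
  (P : profile n m) : bool :=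
  [forall W : {set 'I_m}, in_topk p k W ==> in_core k P W].

(* Main.v *)
Require Import Defs.
From HB Require Import structures.
From mathcomp Require Import all_boot all_order all_algebra.
From mathcomp Require Import reals.
From mathcomp Require Import sequences exp.
From mathcomp Require Import fingroup perm.
From mathcomp Require Import ring lra zify.
Set Implicit Arguments. Unset Strict Implicit. Unset Printing Implicit Defensive.
Import Order.TTheory GRing.Theory Num.Theory.
Local Open Scope ring_scope.

Section S.
Variable R : realType.

Lemma sum_set_prod (I : finType) (a b : I -> R) :
  \sum_(A : {set I}) (\prod_(i in A) a i) * (\prod_(i in ~: A) b i)
  = \prod_(i : I) (a i + b i).
Proof.
have -> : \prod_(i : I) (a i + b i) =
   \prod_(i : I) \sum_(c : bool) (if c then a i else b i).
  by apply: eq_bigr => i _; rewrite big_bool /= addrC.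
rewrite bigA_distr_bigA /=.
rewrite (reindex (fun f : {ffun I -> bool} => [set i | f i])) /=; last first.
  exists (fun A : {set I} => [ffun i => i \in A]) => f _.
    by apply/ffunP => i; rewrite ffunE inE.
  by apply/setP => i; rewrite inE ffunE.
apply: eq_bigr => f _.
rewrite [RHS](bigID (fun i => f i)) /=; congr (_ * _).
  by apply: eq_big => i; rewrite ?inE // => ->.
by apply: eq_big => i; rewrite ?inE //; case: (f i).
Qed.
Variable m : nat.
Implicit Types (p : 'I_m -> R) (A B : {set 'I_m}) (i j : 'I_m).

Definition Pr p (E : pred {set 'I_m}) := \sum_(A | E A) ballot_prob p A.

Definition prob01 p := forall i, 0 <= p i <= 1.

Lemma bp_ge0 p A : prob01 p -> 0 <= ballot_prob p A.
Proof.
move=> hp; apply: mulr_ge0; apply: prodr_ge0 => i _; have /andP[h0 h1] := hp i => //.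
by rewrite subr_ge0.
Qed.

Lemma bp_sum1 p : \sum_(A : {set 'I_m}) ballot_prob p A = 1.
Proof.
rewrite /ballot_prob sum_set_prod; rewrite big1 // => i _; lra.
Qed.

Lemma Pr_ge0 p E : prob01 p -> 0 <= Pr p E.
Proof. by move=> hp; apply: sumr_ge0 => A _; apply: bp_ge0. Qed.

Lemma Pr_le1 p E : prob01 p -> Pr p E <= 1.
Proof.
move=> hp; rewrite -(bp_sum1 p) /Pr [X in _ <= X](bigID E) /= lerDl.
by apply: sumr_ge0 => A _; apply: bp_ge0.
Qed.

Lemma PrE p E : Pr p E = \sum_(A : {set 'I_m}) ballot_prob p A * (E A)%:R.
Proof. by rewrite /Pr big_mkcond; apply: eq_bigr => A _; case: (E A); rewrite ?mulr1 ?mulr0. Qed.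

Definition cc p i A := \prod_(j in A) p j * \prod_(j in ~: A | j != i) (1 - p j).

Lemma split_coord p i (g : {set 'I_m} -> R) :
  \sum_(A : {set 'I_m}) ballot_prob p A * g A =
  \sum_(A : {set 'I_m} | i \notin A) cc p i A * ((1 - p i) * g A + p i * g (i |: A)).
Proof.
rewrite (bigID (fun A => i \in A)) /=.
rewrite (reindex_onto (fun B => i |: B) (fun A => A :\ i)) /=; last first.
  by move=> A iA; rewrite setD1K.
have -> : \sum_(j : {set 'I_m} | (i \in i |: j) && ((i |: j) :\ i == j)) ballot_prob p (i |: j) * g (i |: j)
   = \sum_(j : {set 'I_m} | i \notin j) ballot_prob p (i |: j) * g (i |: j).
  apply: eq_bigl => B; rewrite setU11 /=.
  apply/eqP/idP => [<- | iB]; first by rewrite setD11.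
  by rewrite setU1K.
rewrite addrC -big_split /=; apply: eq_bigr => A iA.
have e1 : ballot_prob p A = (1 - p i) * cc p i A.
  rewrite /ballot_prob /cc [\prod_(j in ~: A) _](bigD1 i) ?inE //= mulrCA; congr (_ * _).
have e2 : ballot_prob p (i |: A) = p i * cc p i A.
  rewrite /ballot_prob /cc big_setU1 //= -mulrA; congr (_ * (_ * _)).
  by apply: eq_bigl => j; rewrite !inE negb_or andbC.
rewrite e1 e2; ring.
Qed.

Lemma cc_eq p p' i A : (forall j, j != i -> p' j = p j) -> i \notin A -> cc p' i A = cc p i A.
Proof.
move=> h iA; rewrite /cc; congr (_ * _).
  by apply: eq_bigr => j jA; apply: h; apply: contraNneq iA => <-.
by apply: eq_bigr => j /andP[_ ji]; rewrite h.
Qed.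

Lemma cc_ge0 p i A : prob01 p -> 0 <= cc p i A.
Proof.
move=> hp; apply: mulr_ge0; apply: prodr_ge0 => j _; have /andP[h0 h1] := hp j => //.
by rewrite subr_ge0.
Qed.

Lemma mono1 p p' i (E : pred {set 'I_m}) :
  prob01 p -> (forall j, j != i -> p' j = p j) ->
  (forall A, i \notin A -> (p i - p' i) * ((E (i |: A))%:R - (E A)%:R) <= 0) ->
  Pr p E <= Pr p' E.
Proof.
move=> hp hp' hE; rewrite !PrE (split_coord p i) (split_coord p' i).
apply: ler_sum => A iA; rewrite (cc_eq hp' iA).
apply: ler_wpM2l; first exact: cc_ge0.
have := hE A iA; lra.
Qed.

Lemma Pr_ext p p' E : (forall j, p j = p' j) -> Pr p E = Pr p' E.
Proof. by move=> h; apply: eq_bigr => A _; rewrite /ballot_prob; congr (_ * _); apply: eq_bigr => j _; rewrite h. Qed.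

Definition pset p (s : seq 'I_m) (pi : R) j := if j \in s then pi else p j.

Lemma pset01 p s pi : prob01 p -> 0 <= pi <= 1 -> prob01 (pset p s pi).
Proof. by move=> hp hpi j; rewrite /pset; case: ifP. Qed.

Lemma mono_seq p pi (E : pred {set 'I_m}) s : prob01 p -> 0 <= pi <= 1 ->
  (forall j, j \in s -> forall A, j \notin A -> (p j - pi) * ((E (j |: A))%:R - (E A)%:R) <= 0) ->
  Pr p E <= Pr (pset p s pi) E.
Proof.
move=> hp hpi; elim: s => [|x s IH] hs.
  by rewrite (@Pr_ext p (pset p [::] pi)) // => j; rewrite /pset in_nil.
apply: le_trans (IH _) _ => [j js|]; first by apply: hs; rewrite inE js orbT.
apply: (mono1 (i := x)); first exact: pset01.
  by move=> j jx; rewrite /pset inE (negbTE jx).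
move=> A xA; rewrite /pset inE eqxx /=; case: ifP => _; first by rewrite subrr mul0r.
by apply: hs => //; rewrite inE eqxx.
Qed.

Section Sym.
Variables (B r : nat) (e : 'I_B.+1 * 'I_r -> 'I_m).
Hypothesis e_inj : injective e.

Definition cnt (b : 'I_B.+1) A := #|[set i : 'I_r | e (b, i) \in A]|.
Definition F0 A := [forall b : 'I_B.+1, (b != ord0) ==> (cnt b A < cnt ord0 A)%N].

Variable tau : 'I_B.+1 -> 'I_B.+1.
Hypothesis tauK : forall b, tau (tau b) = b.

Definition ff x := if [pick y | e y == x] is Some y then e (tau y.1, y.2) else x.

Lemma ff_e y : ff (e y) = e (tau y.1, y.2).
Proof.
rewrite /ff; case: pickP => [y' /eqP/e_inj -> // | /(_ y)]; by rewrite eqxx.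
Qed.

Lemma ff_out x : (forall y, (e y == x) = false) -> ff x = x.
Proof.
move=> none; rewrite /ff; case: pickP => [y ey | //].
by move: (none y); rewrite ey.
Qed.

Lemma ffK x : ff (ff x) = x.
Proof.
case: (pickP (fun y => e y == x)) => [[b i] /eqP <- | none].
  by rewrite !ff_e /= tauK.
by rewrite !ff_out.
Qed.

Lemma ff_inj : injective ff.
Proof. exact: can_inj ffK. Qed.

Definition phi A := [set x | ff x \in A].

Lemma phiK A : phi (phi A) = A.
Proof. by apply/setP => x; rewrite !inE ffK. Qed.

Lemma phi_inj : injective phi.
Proof. exact: can_inj phiK. Qed.

Lemma bp_phi p A : (forall y y', p (e y) = p (e y')) -> ballot_prob p (phi A) = ballot_prob p A.
Proof.
move=> hpe.
have pf x : p (ff x) = p x.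
  case: (pickP (fun y => e y == x)) => [[b i] /eqP <- | none]; first by rewrite ff_e; apply: hpe.
  by rewrite ff_out.
rewrite /ballot_prob; congr (_ * _).
  rewrite [RHS](reindex_inj ff_inj); apply: eq_big => x; rewrite ?inE //.
by rewrite [RHS](reindex_inj ff_inj); apply: eq_big => x; rewrite ?inE // => _; rewrite pf.
Qed.

Lemma cnt_phi b A : cnt b (phi A) = cnt (tau b) A.
Proof. by rewrite /cnt; apply: eq_card => i; rewrite !inE ff_e. Qed.

Lemma Pr_phi p : (forall y y', p (e y) = p (e y')) -> Pr p (fun A => F0 (phi A)) = Pr p F0.
Proof.
move=> hpe; rewrite /Pr [RHS](reindex_inj phi_inj); apply: eq_bigr => A _.
by rewrite bp_phi.
Qed.

End Sym.

Lemma sum_uniq_le1 (I : finType) (P : pred I) :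
  (forall x x', P x -> P x' -> x = x') -> \sum_(x : I) ((P x)%:R : R) <= 1.
Proof.
move=> h; case: (pickP P) => [x0 Px0 | none].
  rewrite (bigD1 x0) //= Px0 big1 ?addr0 // => x xx0.
  by case Px: (P x) => //; move: xx0; rewrite (h _ _ Px Px0) eqxx.
by rewrite big1 // => x _; rewrite none.
Qed.

Lemma sym_bound (B r : nat) (e : 'I_B.+1 * 'I_r -> 'I_m) p :
  injective e -> prob01 p -> (forall y y', p (e y) = p (e y')) ->
  (B.+1)%:R * Pr p (F0 e) <= 1.
Proof.
move=> e_inj hp hpe.
pose tau (a : 'I_B.+1) := (tperm ord0 a : 'I_B.+1 -> 'I_B.+1).
have tauK a b : tau a (tau a b) = b by rewrite /tau tpermK.
have -> : (B.+1)%:R * Pr p (F0 e) = \sum_(a : 'I_B.+1) Pr p (fun A => F0 e (phi e (tau a) A)).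
  rewrite (eq_bigr (fun _ => Pr p (F0 e))); last by move=> a _; rewrite (Pr_phi e_inj (tauK a)).
  by rewrite sumr_const card_ord mulr_natl.
rewrite (eq_bigr (fun a => \sum_(A : {set 'I_m}) ballot_prob p A * (F0 e (phi e (tau a) A))%:R)); last first.
  by move=> a _; rewrite PrE.
rewrite exchange_big /=.
apply: le_trans (_ : _ <= \sum_(A : {set 'I_m}) ballot_prob p A) _; last by rewrite bp_sum1.
apply: ler_sum => A _.
rewrite -mulr_sumr ler_piMr //; first exact: bp_ge0.
apply: sum_uniq_le1 => a a' Fa Fa'.
have key : forall a a', F0 e (phi e (tau a) A) -> a' != a -> (cnt e a' A < cnt e a A)%N.
  move=> c c' /forallP /(_ (tau c c')) h.
  rewrite !(cnt_phi e_inj (tau c)) (tauK c) {2}/tau tpermL in h.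
  move=> neq; apply: (implyP h); apply: contra neq => /eqP h0.
  by rewrite -[c'](tauK c) h0 /tau tpermL.
apply/eqP; apply: contraT => neq.
have h1 : (cnt e a' A < cnt e a A)%N by apply: key => //; rewrite eq_sym.
have h2 : (cnt e a A < cnt e a' A)%N by apply: key.
by move: (ltn_trans h1 h2); rewrite ltnn.
Qed.

Lemma Pr_sub p (E F : pred {set 'I_m}) : prob01 p -> (forall A, E A -> F A) -> Pr p E <= Pr p F.
Proof.
move=> hp h; rewrite !PrE; apply: ler_sum => A _; apply: ler_wpM2l; first exact: bp_ge0.
by case EA: (E A); [rewrite h | case: (F A)].
Qed.

Lemma card_split A X Y : #|A :&: X| = (#|A :&: (X :&: Y)| + #|A :&: (X :\: Y)|)%N.
Proof.
rewrite -(cardsID Y (A :&: X)); congr (_ + _)%N; apply: eq_card => x; rewrite !inE;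
by case: (x \in A); case: (x \in X); case: (x \in Y).
Qed.

Lemma card_U1I j A X : j \notin A -> #|(j |: A) :&: X| = ((j \in X) + #|A :&: X|)%N.
Proof.
move=> jA; case jX: (j \in X).
  have -> : (j |: A) :&: X = j |: (A :&: X).
    by apply/setP => x; rewrite !inE; case: eqP => [->|]; rewrite ?jX ?andbT.
  by rewrite cardsU1 inE (negbTE jA).
have -> : (j |: A) :&: X = A :&: X.
  by apply/setP => x; rewrite !inE; case: eqP => [->|]; rewrite ?jX ?(negbTE jA).
by [].
Qed.

Lemma exists_e (T U : {set 'I_m}) r b : [disjoint T & U] -> #|T| = r -> (0 < r)%N ->
  (b * r <= #|U|)%N ->
  exists e : 'I_b.+1 * 'I_r -> 'I_m, [/\ injective e, (forall i : 'I_r, e (ord0, i) \in T),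
     (forall x, x \in T -> exists i : 'I_r, e (ord0, i) = x) &
     (forall (c : 'I_b.+1) (i : 'I_r), c != ord0 -> e (c, i) \in U)].
Proof.
move=> dTU cT r0 bU.
have [x0 _] : exists x0, x0 \in T by apply/set0Pn; rewrite -card_gt0 cT.
pose S := enum T ++ enum U.
have sT : size (enum T) = r by rewrite -cardE.
have sS : size S = (r + #|U|)%N by rewrite size_cat sT cardE.
have uS : uniq S.
  rewrite cat_uniq !enum_uniq /= andbT; apply/hasPn => x; rewrite mem_enum => xU.
  by rewrite mem_enum (disjointFl dTU xU).
have bnd (c : 'I_b.+1) (i : 'I_r) : (c * r + i < size S)%N.
  rewrite sS; have := ltn_ord c; have := ltn_ord i; nia.
exists (fun y : 'I_b.+1 * 'I_r => nth x0 S (y.1 * r + y.2)); split.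
- move=> [c i] [c' i'] /= /eqP; rewrite nth_uniq // => /eqP h.
  have hc : c = c' :> nat.
    by move: (congr1 (divn^~ r) h) => /=; rewrite !divnMDl // !divn_small // !addn0.
  have hi : i = i' :> nat.
    by move: (congr1 (modn^~ r) h) => /=; rewrite !modnMDl !modn_small.
  have -> : c = c' by apply: val_inj.
  have -> : i = i' by apply: val_inj.
  by [].
- move=> i /=; rewrite mul0n add0n nth_cat sT ltn_ord.
  by rewrite -mem_enum mem_nth // sT.
- move=> x xT; have ix : (index x (enum T) < r)%N by rewrite -sT index_mem mem_enum.
  exists (Ordinal ix) => /=; rewrite mul0n add0n nth_cat sT ix nth_index //.
  by rewrite mem_enum.
- move=> c i c0 /=; rewrite nth_cat sT.
  have c1 : (1 <= c)%N by rewrite lt0n.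
  have -> : (c * r + i < r)%N = false by apply/negbTE; rewrite -leqNgt; nia.
  rewrite -mem_enum mem_nth // -cardE.
  have h1 : (c * r <= b * r)%N by rewrite leq_mul2r -ltnS ltn_ord orbT.
  have h2 : (r <= c * r)%N by rewrite leq_pmull.
  have := ltn_ord i; move: h1 h2 bU; set x := (c * r)%N; set y := (b * r)%N; set z := #|U|; lia.
Qed.

Lemma arith_final (q : R) (k t b : nat) : 0 <= q -> (b.+1)%:R * q <= 1 ->
  (k.+1 <= t * b.+1)%N -> (b <= k)%N -> q * k%:R <= t%:R - (k.+1%:R)^-1.
Proof.
move=> q0 hq hkt hbk.
have hkt' : (k.+1)%:R <= t%:R * (b.+1)%:R :> R by rewrite -natrM ler_nat.
have hbk' : (b.+1)%:R <= (k.+1)%:R :> R by rewrite ler_nat.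
set B1 := (b.+1)%:R : R in hq hkt' hbk' *.
set K1 := (k.+1)%:R : R in hkt' hbk' *.
have B1p : 0 < B1 by rewrite /B1 ltr0n.
have K1p : 0 < K1 by rewrite /K1 ltr0n.
have hK : k%:R = K1 - 1 by rewrite /K1 -addn1 natrD; ring.
rewrite hK.
have iB := mulfV (lt0r_neq0 B1p).
have iK := mulfV (lt0r_neq0 K1p).
have iBp : 0 < B1^-1 by rewrite invr_gt0.
have iKp : 0 < K1^-1 by rewrite invr_gt0.
set x := B1^-1 in iB iBp *; set y := K1^-1 in iK iKp *.
have qx : q <= x by nra.
have xy : y <= x by nra.
have h1 : (K1 - 1) * x <= t%:R - x by nra.
have K11 : 1 <= K1 by rewrite /K1 ler1n.
have h2 : q * (K1 - 1) <= x * (K1 - 1) by apply: ler_wpM2r => //; lra.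
lra.
Qed.

Definition Ev (W W' : {set 'I_m}) : pred {set 'I_m} := fun A => (#|A :&: W| < #|A :&: W'|)%N.

Lemma key_q p k (W W' : {set 'I_m}) : prob01 p -> in_topk p k W ->
  (1 <= #|W'|)%N -> (#|W'| <= k)%N ->
  Pr p (Ev W W') * k%:R <= #|W'|%:R - (k.+1%:R)^-1.
Proof.
move=> hp /andP[/eqP cW /forallP top] t1 tk.
set t := #|W'| in t1 tk *.
set T := W' :\: W; set U := W :\: W'.
have hU : (#|W :&: W'| + #|U| = k)%N by rewrite cardsID.
have hT : (#|W :&: W'| + #|T| = t)%N by rewrite setIC cardsID.
have splitW A : #|A :&: W| = (#|A :&: (W :&: W')| + #|A :&: U|)%N.
  exact: (card_split A W W').
have splitW' A : #|A :&: W'| = (#|A :&: (W :&: W')| + #|A :&: T|)%N.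
  by rewrite [W :&: W']setIC; apply: card_split.
case r0: (#|T| == 0)%N.
  have T0 : T = set0 by apply: cards0_eq; apply/eqP.
  have -> : Pr p (Ev W W') = 0.
    rewrite /Pr big_pred0 // => A; apply/negbTE; rewrite /Ev -leqNgt splitW splitW' T0 setI0 cards0.
    by rewrite addn0 leq_addr.
  rewrite mul0r subr_ge0; apply: le_trans (_ : 1 <= _).
    by rewrite invf_le1 ?ltr0n // ler1n.
  by rewrite ler1n.
set r := #|T| in r0 hT splitW' *.
have rp : (0 < r)%N by rewrite lt0n r0.
set s := #|U| in hU splitW *.
set b := (s %/ r)%N.
have bs : (b * r <= s)%N by apply: leq_divM.
have sb : (s < b.+1 * r)%N by apply: ltn_ceil.
have dTU : [disjoint T & U].
  rewrite -setI_eq0; apply/eqP/setP => x; rewrite !inE.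
  by case: (x \in W); case: (x \in W'); rewrite ?andbF.
have [e [e_inj eT eTs eU]] := exists_e dTU (erefl r) rp bs.
have [w1 w1W] : exists w, w \in W.
  by apply/set0Pn; rewrite -card_gt0 cW; apply: leq_trans t1 tk.
case: (@arg_minP _ _ _ w1 (fun w => w \in W) p w1W) => w0 w0W hmin.
set pi := p w0.
have pi01 : 0 <= pi <= 1 by apply: hp.
set p2 := pset p (enum (W :|: W')) pi.
have hp2 : prob01 p2 by apply: pset01.
have step1 : Pr p (Ev W W') <= Pr p2 (Ev W W').
  apply: mono_seq => // j; rewrite mem_enum inE => jWW A jA.
  rewrite /Ev !card_U1I //.
  case jW: (j \in W); case jW': (j \in W'); rewrite ?add1n ?add0n ?ltnS.
  - by rewrite subrr mulr0.
  - apply: mulr_ge0_le0; first by rewrite subr_ge0; apply: hmin.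
    rewrite subr_le0 ler_nat; case E1: (_ < _)%N => //=.
    by rewrite (ltn_trans (ltnSn _) E1).
  - apply: mulr_le0_ge0.
      by rewrite subr_le0; have := top w0; rewrite w0W /= => /forallP /(_ j); rewrite inE jW.
    rewrite subr_ge0 ler_nat; case E1: (#|A :&: W| < #|A :&: W'|)%N => //=.
    by move/ltnW: E1 => ->.
  - by move: jWW; rewrite jW jW'.
have step2 : Pr p2 (Ev W W') <= Pr p2 (F0 e).
  apply: Pr_sub => // A; rewrite /Ev splitW splitW' ltn_add2l => lt.
  apply/forallP => c; apply/implyP => c0.
  have h0 : (#|A :&: T| <= cnt e ord0 A)%N.
    rewrite /cnt; apply: (leq_trans _ (leq_imset_card (fun z : 'I_r => e (ord0, z)) [set z : 'I_r | e (ord0, z) \in A])).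
    apply: subset_leq_card; apply/subsetP => x /setIP [xA xT].
    have [z ez] := eTs x xT; apply/imsetP; exists z; rewrite ?inE ?ez //.
  have hc : (cnt e c A <= #|A :&: U|)%N.
    rewrite /cnt -(card_imset _ (fun (z z' : 'I_r) (h : e (c, z) = e (c, z')) => congr1 snd (e_inj _ _ h))).
    apply: subset_leq_card; apply/subsetP => x /imsetP [z]; rewrite inE => eA ->.
    by rewrite inE eA eU.
  by apply: leq_ltn_trans hc (leq_trans lt h0).
have step3 : (b.+1)%:R * Pr p2 (F0 e) <= 1.
  apply: sym_bound => //.
  have pe y : p2 (e y) = pi.
    rewrite /p2 /pset mem_enum inE; case: y => c z.
    case c0: (c == ord0); first by move/eqP: c0 => ->; have := eT z; rewrite !inE => /andP[_ ->]; rewrite orbT.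
    by have := eU c z (negbT c0); rewrite !inE => /andP[_ ->].
  by move=> y y'; rewrite !pe.
apply: arith_final.
- exact: Pr_ge0.
- apply: le_trans step3; apply: ler_wpM2l => //; apply: le_trans step1 step2.
- have : ((k.+1) * r <= t * b.+1 * r)%N.
    have e1 : (t * b.+1 * r >= t * s.+1)%N by rewrite -mulnA leq_mul2l sb orbT.
    apply: leq_trans e1; nia.
  by rewrite leq_pmul2r.
- apply: leq_trans (leq_div _ _) _; lia.
Qed.

Definition pw n p (P : profile n m) := \prod_(j < n) ballot_prob p (P j).

Lemma pw_ge0 n p (P : profile n m) : prob01 p -> 0 <= pw p P.
Proof. by move=> hp; apply: prodr_ge0 => j _; apply: bp_ge0. Qed.

Lemma prof_sum n p (h : {set 'I_m} -> R) :
  \sum_(P : profile n m) \prod_(j < n) (ballot_prob p (P j) * h (P j)) =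
  (\sum_(A : {set 'I_m}) ballot_prob p A * h A) ^+ n.
Proof.
rewrite -[in RHS](card_ord n) -prodr_const bigA_distr_bigA /=.
by [].
Qed.

Lemma prof_total n p : \sum_(P : profile n m) pw p P = 1.
Proof.
rewrite /pw (eq_bigr (fun P : profile n m => \prod_(j < n) (ballot_prob p (P j) * 1))); last first.
  by move=> P _; apply: eq_bigr => j _; rewrite mulr1.
rewrite (prof_sum n p (fun _ => 1)) (eq_bigr (fun A => ballot_prob p A)) ?bp_sum1 ?expr1n // => A _.
by rewrite mulr1.
Qed.

Lemma chernoff n p (f : pred {set 'I_m}) (mu : R) (t k : nat) : prob01 p -> 1 <= mu ->
  mu ^+ (t * n) * profile_prob (n := n) p (fun P => (t * n <= k * \sum_(j < n) f (P j))%N)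
  <= (1 + Pr p f * (mu ^+ k - 1)) ^+ n.
Proof.
move=> hp mu1.
pose h (A : {set 'I_m}) := 1 + (f A)%:R * (mu ^+ k - 1).
have hA : \sum_(A : {set 'I_m}) ballot_prob p A * h A = 1 + Pr p f * (mu ^+ k - 1).
  rewrite /h (eq_bigr (fun A => ballot_prob p A + ballot_prob p A * (f A)%:R * (mu ^+ k - 1))); last first.
    by move=> A _; ring.
  by rewrite big_split /= bp_sum1 -mulr_suml -PrE.
rewrite -hA -prof_sum /profile_prob mulr_sumr.
apply: le_trans (_ : _ <= \sum_(P : profile n m | (t * n <= k * \sum_(j < n) f (P j))%N)
   \prod_(j < n) (ballot_prob p (P j) * h (P j))) _.
  apply: ler_sum => P hP.
  have -> : \prod_(j < n) (ballot_prob p (P j) * h (P j)) = pw p P * \prod_(j < n) h (P j).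
    by rewrite /pw -big_split.
  rewrite mulrC; apply: ler_wpM2l; first exact: pw_ge0.
  have -> : \prod_(j < n) h (P j) = (mu ^+ k) ^+ (\sum_(j < n) f (P j)).
    rewrite expr_sum; apply: eq_bigr => j _; rewrite /h; case: (f (P j)) => /=; rewrite ?expr1 ?expr0 ?mulr1n ?mulr0n; ring.
  by rewrite -!exprM; apply: ler_weXn2l.
rewrite [X in _ <= X](bigID (fun P : profile n m => (t * n <= k * \sum_(j < n) f (P j))%N)) /= lerDl.
apply: sumr_ge0 => P _; apply: prodr_ge0 => j _; apply: mulr_ge0; first exact: bp_ge0.
rewrite /h; case: (f (P j)) => /=; rewrite ?mulr1n ?mulr0n ?mul1r ?mul0r ?addr0 //.
by rewrite addrC subrK exprn_ge0 //; apply: le_trans mu1.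
Qed.

Lemma bern (x : R) n : 0 <= x -> 1 + n%:R * x <= (1 + x) ^+ n.
Proof.
move=> x0; elim: n => [|n IH]; first by rewrite mul0r addr0 expr0.
rewrite exprS -natr1.
have h : 0 <= (1 + x) ^+ n by apply: exprn_ge0; lra.
have n0 : 0 <= n%:R :> R by rewrite ler0n.
have h2 : (1 + x) * (1 + n%:R * x) <= (1 + x) * (1 + x) ^+ n by apply: ler_wpM2l => //; lra.
nra.
Qed.

Lemma bern2 (x : R) n : 0 <= x -> (1 + x) ^+ n * (1 - n%:R * x) <= 1.
Proof.
move=> x0; elim: n => [|n IH]; first by rewrite mul0r subr0 expr0 mulr1.
rewrite exprS -natr1.
have h : 0 <= (1 + x) ^+ n by apply: exprn_ge0; lra.
have n0 : 0 <= n%:R :> R by rewrite ler0n.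
have e : (1 + x) * (1 - (n%:R + 1) * x) <= 1 - n%:R * x by nra.
nra.
Qed.

Lemma mu_exists (k : nat) : exists mu : R, exists rho : R, [/\ 1 <= mu, 0 < rho, rho < 1 &
  forall (t : nat) (q : R), (1 <= t)%N -> (t <= k)%N -> 0 <= q ->
    q * k%:R <= t%:R - (k.+1%:R)^-1 ->
    1 + q * (mu ^+ k - 1) <= rho * mu ^+ t].
Proof.
case: k => [|k'].
  exists 1, (1/2); split => //; try lra.
  by move=> t q t1 t0; move: (leq_trans t1 t0).
set k := k'.+1.
set K : R := k%:R.
have K1 : 1 <= K by rewrite /K ler1n.
set d : R := (K + 1)^-1.
have hd : d * (K + 1) = 1 by rewrite /d mulVf //; lra.
have d0 : 0 < d by rewrite /d invr_gt0; lra.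
have d2 : d <= 1/2 by nra.
have ek : k.+1%:R = K + 1 by rewrite /K -natr1.
set eps : R := d / (4 * K * K).
have he : eps * (4 * K * K) = d by rewrite /eps mulfVK //; nra.
have e0 : 0 < eps by rewrite /eps divr_gt0 //; nra.
set a := K * eps.
have ha : 4 * K * a = d by rewrite /a -he; ring.
have a0 : 0 < a by rewrite /a mulr_gt0 //; lra.
have a8 : a <= 1/8 by nra.
have aE : a = K * eps by [].
have eps8 : eps <= 1/8 by nra.
set c : R := d * eps / (2 * (1 + a)).
have hc : c * (2 * (1 + a)) = d * eps by rewrite /c mulfVK //; lra.
have c0 : 0 < c by rewrite /c divr_gt0 //; [apply: mulr_gt0 | lra].
have c1 : c < 1 by nra.
exists (1 + eps), (1 - c); split; try lra.
move=> t q t1 tk q0; rewrite ek => hq.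
set T : R := t%:R in hq *.
have T1 : 1 <= T by rewrite /T ler1n.
have TK : T <= K by rewrite /T /K ler_nat.
set X := (1 + eps) ^+ k.
have X1 : 1 <= X by rewrite /X exprn_ege1 //; lra.
have hX : X * (1 - a) <= 1 by rewrite /X /a; apply: bern2; lra.
have X2 : X <= 2 by nra.
have hX1 : X - 1 <= a * (1 + 2 * a) by nra.
have hY : 1 + T * eps <= (1 + eps) ^+ t by rewrite /T; apply: bern; lra.
set Y := (1 + eps) ^+ t in hY *.
have hqK : q * K <= T - d by move: hq; rewrite /d.
have s1 : q * K * (X - 1) <= (T - d) * (a * (1 + 2 * a)).
  have : q * K * (X - 1) <= (T - d) * (X - 1) by apply: ler_wpM2r; lra.
  have : (T - d) * (X - 1) <= (T - d) * (a * (1 + 2 * a)) by apply: ler_wpM2l; lra.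
  lra.
have s2 : q * (X - 1) <= (T - d) * eps * (1 + 2 * a).
  have e2 : (T - d) * (a * (1 + 2 * a)) = K * ((T - d) * eps * (1 + 2 * a)) by rewrite /a; ring.
  rewrite e2 in s1.
  have : K * (q * (X - 1)) <= K * ((T - d) * eps * (1 + 2 * a)) by rewrite mulrA [K * q]mulrC.
  by rewrite ler_pM2l //; lra.
have s3 : (T - d) * (1 + 2 * a) <= T - d / 2 by nra.
have s4 : q * (X - 1) <= (T - d / 2) * eps by nra.
have s5 : (1 - c) * (1 + T * eps) <= (1 - c) * Y by apply: ler_wpM2l; lra.
have s6 : T * eps <= a by rewrite /a; nra.
have s7 : c * (1 + T * eps) <= c * (1 + a) by nra.
nra.
Qed.

Definition Gx n k p (x : {set 'I_m} * {set 'I_m}) (P : profile n m) : bool :=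
  [&& in_topk p k x.1, (1 <= #|x.2|)%N, (#|x.2| <= k)%N &
      (#|x.2| * n <= k * \sum_(j < n) Ev x.1 x.2 (P j))%N].

Lemma per_pair n k p mu rho x : prob01 p -> 1 <= mu -> 0 < rho ->
  (forall (t : nat) (q : R), (1 <= t)%N -> (t <= k)%N -> 0 <= q ->
    q * k%:R <= t%:R - (k.+1%:R)^-1 -> 1 + q * (mu ^+ k - 1) <= rho * mu ^+ t) ->
  profile_prob (n := n) p (Gx k p x) <= rho ^+ n.
Proof.
move=> hp mu1 rho0 hmu.
case h: [&& in_topk p k x.1, (1 <= #|x.2|)%N & (#|x.2| <= k)%N]; last first.
  rewrite /profile_prob big_pred0; first by apply: exprn_ge0; apply: ltW.
  move=> P.
  by rewrite /Gx; move: h; case: (in_topk p k x.1) => //=; case: (1 <= _)%N => //=; case: (_ <= k)%N.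
case/and3P: h => hW t1 tk.
have -> : profile_prob (n := n) p (Gx k p x) =
   profile_prob (n := n) p (fun P => (#|x.2| * n <= k * \sum_(j < n) Ev x.1 x.2 (P j))%N).
  by apply: eq_bigl => P; rewrite /Gx hW t1 tk.
have hc := chernoff n (Ev x.1 x.2) #|x.2| k hp mu1.
have hq := hmu _ _ t1 tk (Pr_ge0 _ hp) (key_q hp hW t1 tk).
have hb : (1 + Pr p (Ev x.1 x.2) * (mu ^+ k - 1)) ^+ n <= (rho * mu ^+ #|x.2|) ^+ n.
  apply: lerXn2r; rewrite ?nnegrE //.
    apply: addr_ge0 => //; apply: mulr_ge0; first exact: Pr_ge0.
    by rewrite subr_ge0 exprn_ege1.
  by apply: mulr_ge0; [apply: ltW | apply: exprn_ge0; apply: le_trans mu1].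
have mp : 0 < mu ^+ (#|x.2| * n) by apply: exprn_gt0; apply: lt_le_trans mu1.
have := le_trans hc hb; rewrite exprMn -exprM [rho ^+ n * _]mulrC ler_pM2l //.
Qed.

Lemma fail_pair n k p (P : profile n m) : ~~ topk_in_core p k P ->
  exists x, Gx k p x P.
Proof.
move/forallPn => [W]; rewrite negb_imply => /andP[hW hc].
move: (hW) => /andP[cW _]; move: hc; rewrite /in_core cW /=.
move/forallPn => [N'] /forallPn [W']; rewrite negb_imply => /andP[/andP[N0 hN] /existsPn hE].
have hlt (v : 'I_n) : v \in N' -> (#|P v :&: W| < #|P v :&: W'|)%N.
  by move=> jN; move: (hE v); rewrite jN /= -ltnNge.
have [j0 j0N] : exists v : 'I_n, v \in N' by apply/set0Pn.
have hS : (#|N'| <= \sum_(j < n) Ev W W' (P j))%N.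
  rewrite -sum1_card big_mkcond /=; apply: leq_sum => j _.
  by case: ifP => // jN; rewrite /Ev hlt.
have nN : (#|N'| <= n)%N by apply: leq_trans (max_card _) _; rewrite card_ord.
have n0 : (0 < n)%N by case: n j0 {hE hlt hS nN P N' N0 hN j0N} => [[]|].
exists (W, W') => /=; apply/and4P; split => //.
- have := hlt _ j0N => h; have : (0 < #|P j0 :&: W'|)%N by apply: leq_ltn_trans h.
  by move=> h2; apply: leq_trans h2 _; apply: subset_leq_card; apply: subsetIr.
- have : (#|W'| * n <= k * n)%N.
    by apply: leq_trans hN _; rewrite mulnC leq_mul2l nN orbT.
  by rewrite leq_pmul2r.
- by apply: leq_trans hN _; rewrite mulnC leq_mul2l hS orbT.
Qed.

Lemma union_bound n k p : prob01 p ->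
  1 - profile_prob (n := n) p (topk_in_core p k) <=
  \sum_(x : {set 'I_m} * {set 'I_m}) profile_prob (n := n) p (Gx k p x).
Proof.
move=> hp.
have tot := prof_total n p; rewrite /pw in tot.
rewrite -tot (bigID (topk_in_core p k)) /= /profile_prob addrC addrK.
have w0 (P : profile n m) : 0 <= \prod_(j < n) ballot_prob p (P j).
  by apply: prodr_ge0 => j _; apply: bp_ge0.
rewrite (eq_bigr (fun x => \sum_(P : profile n m) (Gx k p x P)%:R * \prod_(j < n) ballot_prob p (P j))); last first.
  move=> x _; rewrite big_mkcond; apply: eq_bigr => P _.
  by case: (Gx k p x P); rewrite ?mul1r ?mul0r.
rewrite exchange_big /=.
apply: le_trans (_ : _ <= \sum_(P : profile n m | ~~ topk_in_core p k P)
   \sum_(x : {set 'I_m} * {set 'I_m}) (Gx k p x P)%:R * \prod_(j < n) ballot_prob p (P j)) _.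
  apply: ler_sum => P hP.
  have [x hx] := fail_pair hP.
  rewrite (bigD1 x) //= hx mul1r lerDl; apply: sumr_ge0 => y _.
  by apply: mulr_ge0.
rewrite [X in _ <= X](bigID (topk_in_core p k)) /= lerDr.
by apply: sumr_ge0 => P _; apply: sumr_ge0 => y _; apply: mulr_ge0.
Qed.
End S.

Unset Implicit Arguments.

Theorem theorem16 (R : realType) (m k : nat) (p : 'I_m -> R) :
  (k < m)%N -> (forall i, 0 < p i < 1) ->
  exists c : R, 0 < c /\
    exists N : nat, forall n : nat, (N <= n)%N ->
      1 - profile_prob (n := n) p (topk_in_core p k) <= expR (- (c * n%:R)).
Proof.
move=> _ hp.
have hp01 : prob01 p by move=> i; have /andP[h0 h1] := hp i; rewrite ltW ?ltW.
have [mu [rho [mu1 rho0 rho1 hmu]]] := mu_exists R k.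
set M : R := #|{: {set 'I_m} * {set 'I_m}}|%:R.
have M0 : 0 <= M by rewrite /M ler0n.
have hb n : 1 - profile_prob (n := n) p (topk_in_core p k) <= M * rho ^+ n.
  apply: le_trans (union_bound n k hp01) _.
  apply: le_trans (_ : _ <= \sum_(x : {set 'I_m} * {set 'I_m}) rho ^+ n) _.
    apply: ler_sum => x _; exact: (per_pair n x hp01 mu1 rho0 hmu).
  by rewrite sumr_const mulr_natl.
set r1 := (1 + rho) / 2.
set c := 1 - r1.
have c0 : 0 < c by rewrite /c /r1; lra.
set g := r1 / rho - 1.
have hg : rho * (1 + g) = r1 by rewrite /g addrC subrK mulrC divfK //; apply: lt0r_neq0.
have g0 : 0 < g.
  rewrite /g subr_gt0 ltr_pdivlMr // mul1r /r1; lra.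
exists c; split => //.
exists (Num.bound (M / g)) => n hn.
have hMg : M / g < n%:R.
  apply: lt_le_trans (archi_boundP _) _; first by apply: divr_ge0 => //; apply: ltW.
  by rewrite ler_nat.
have hng : M <= n%:R * g by rewrite -ler_pdivrMr // ltW.
apply: le_trans (hb n) _.
have s1 : M * rho ^+ n <= r1 ^+ n.
  rewrite -hg exprMn mulrC ler_pM2l; last by apply: exprn_gt0.
  apply: le_trans hng _; apply: le_trans (bern _ (ltW g0)); lra.
apply: le_trans s1 _.
rewrite -mulNr expRM_natr.
apply: lerXn2r; rewrite ?nnegrE.
- by rewrite /r1; apply: divr_ge0 => //; lra.
- exact: ltW (expR_gt0 _).
- have := expR_ge1Dx (- c); rewrite /c; lra.
Qed.
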